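(* Let $X$ be a nonempty finite set and let $NG$ be an NG-group on $X$. Then the directed multigraph $(NG)_{dig}$ is not strongly connected.
   Context: An NG-group on a set $X$ is a set of maps $X \to X$ that forms a group under composition of functions and is not contained in the symmetric group $\mathrm{Sym}(X)$. The directed multigraph $(NG)_{dig}$ has vertex set $X$. For every $f \in NG$ and every $x \in X$ there is one arc from $x$ to $f(x)$. A digraph is strongly connected if for every ordered pair of vertices $(u, v)$ there is a directed path from $u$ to $v$. *)

(* Defs.v *)
From mathcomp Require Import all_boot.
Set Implicit Arguments. Unset Strict Implicit. Unset Printing Implicit Defensive.

Definition fcomp (X : finType) (f g : {ffun X -> X}) : {ffun X -> X} :=
  [ffun x => f (g x)].

Definition is_group_of_maps (X : finType) (G : {set {ffun X -> X}}) : Prop :=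
  (forall f g, f \in G -> g \in G -> fcomp f g \in G) /\
  exists2 e, e \in G &
    (forall f, f \in G -> fcomp e f = f /\ fcomp f e = f) /\
    (forall f, f \in G -> exists2 g, g \in G & fcomp f g = e /\ fcomp g f = e).

Definition not_in_Sym (X : finType) (G : {set {ffun X -> X}}) : Prop :=
  exists2 f, f \in G & ~ bijective f.

Definition NG_group (X : finType) (G : {set {ffun X -> X}}) : Prop :=
  is_group_of_maps G /\ not_in_Sym G.

(* Arc relation of (NG)_dig: an arc x -> f x for each f in G (multiplicities
   are irrelevant for reachability). *)
Definition dig_rel (X : finType) (G : {set {ffun X -> X}}) : rel X :=
  fun x y => [exists f in G, f x == y].

Definition strongly_connected (X : finType) (e : rel X) : Prop :=
  forall u v : X, connect e u v.

(* Main.v *)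
Require Import Defs.
From mathcomp Require Import all_boot.

Lemma nonsurj (X : finType) (f : X -> X) : ~ bijective f -> exists u, u \notin codom f.
Proof.
move=> nb; case: (boolP [exists u, u \notin codom f]) => [/existsP[u hu]|]; first by exists u.
move/existsPn=> all; exfalso; apply: nb.
have inj : injective f.
  apply/(injectiveP); apply/injectiveP.
  have: #|codom f| == #|X|.
    by apply/eqP; apply: eq_card => y; rewrite inE; move: (all y); rewrite negbK.
  by move/image_injP => h x y; apply: h.
exact: injF_bij.
Qed.

Theorem mainTheorem5 (X : finType) (G : {set {ffun X -> X}}) :
  0 < #|X| -> NG_group G -> ~ strongly_connected (dig_rel G).
Proof.
move=> _ [[_ [e eG [hid hinv]]] [f0 f0G nb]] sc.
have [u hu] := @nonsurj _ _ nb.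
have [h hG [f0h _]] := hinv f0 f0G.
have arc : forall x y, dig_rel G x y -> y \in codom f0.
  move=> x y /existsP[g /andP[gG /eqP <-]].
  have [<- _] := hid g gG.
  rewrite -f0h ffunE; apply/codomP; exists (h (g x)); by rewrite ffunE.
move: (sc (f0 u) u) => /connectP[p pth lst].
case/lastP: p pth lst => [|p y] /=.
  by move=> _ e0; move: hu; rewrite e0 codom_f.
rewrite rcons_path last_rcons => /andP[_ a] ey.
by move: (arc _ _ a); rewrite -ey (negbTE hu).
Qed.
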